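(* Let $\{F_1,F_2,F_3,\ldots,F_m\}$, $m\ge2$, be a collection of $X$-forests (all rooted or all unrooted), and let $F$ be a maximum agreement forest for it. Then there exists a maximal agreement forest $F'$ for $F_1$ and $F_2$ such that $F$ is also a maximum agreement forest for $\{F',F_3,\ldots,F_m\}$.
   Context: $X$-forests: for a finite label set $X$, an unrooted $X$-forest is a subgraph of a tree whose leaves are bijectively labeled by $X$ and whose unlabeled vertices have degree at least 3, each component containing a leaf, component label sets partitioning $X$; a rooted $X$-forest is the same with a distinguished leaf $\rho\in X$ as root of the underlying tree, each component rooted at $\rho$ or at the lowest common ancestor of its labeled leaves. Forests are taken up to forced contraction (unlabeled degree-2 non-root vertices suppressed, unlabeled vertices of degree $<2$ deleted). $\mathrm{Ord}(F)$ is the number of components. $F'$ is a subforest of $F$ if, up to forced contraction, $F'$ is isomorphic (preserving labels and roots) to $F$ with some edges deleted. An agreement forest for a collection is an $X$-forest that is a subforest of each member; a maximum agreement forest is one of minimum order. An agreement forest $F$ for $F_1,F_2$ is a maximal agreement forest if there is no agreement forest $F'$ for $F_1,F_2$ with $F$ a subforest of $F'$ and $\mathrm{Ord}(F')<\mathrm{Ord}(F)$. *)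

(* Defs.v *)
(* X-forests as concrete labeled graphs, compared up to
   forced contraction via their "essential" (non-suppressed) vertices. *)
From mathcomp Require Import all_boot.
Set Implicit Arguments. Unset Strict Implicit. Unset Printing Implicit Defensive.

(* A labeled graph: vertex type, underlying tree edges, forest edges
   (a subset of the tree edges), and the labeling of X. *)
Record lgraph (X : finType) := LGraph {
  lV : finType;
  ltr : rel lV;
  lfe : rel lV;
  llab : X -> lV }.
Arguments lV {X} l.
Arguments ltr {X} l _ _.
Arguments lfe {X} l _ _.
Arguments llab {X} l _.

Definition avoid {V : finType} (e : rel V) (v : V) : rel V :=
  fun a b => [&& e a b, a != v & b != v].

(* in an acyclic graph: v lies on the (unique) e-path between u and w *)
Definition between {V : finType} (e : rel V) (u w v : V) : bool :=
  connect e u w && [|| v == u, v == w | ~~ connect (avoid e v) u w].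

Definition deg {V : finType} (e : rel V) (v : V) : nat := #|[set w | e v w]|.

Section Graph.
Variables (X : finType) (r : option X) (G : lgraph X).
(* r = None : unrooted;  r = Some rho : rooted with root label rho *)
Local Notation V := (lV G).
Local Notation tr := (ltr G).
Local Notation fe := (lfe G).
Local Notation lab := (llab G).

(* vertices surviving the deletion part of forced contraction:
   those on a forest path between two labeled leaves *)
Definition kept (v : V) : bool :=
  [exists x, exists y, between fe (lab x) (lab y) v].

(* unlabeled kept vertices of degree >= 3 in the kept forest *)
Definition is_median (v : V) : bool :=
  [exists a, exists b, exists c,
     [&& between fe (lab a) (lab b) v, between fe (lab b) (lab c) v
       & between fe (lab a) (lab c) v]].

(* root of a component (rooted case): the kept vertex that is an ancestor,
   in the underlying tree rooted at rho, of all labels of its component,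
   i.e. rho or the lowest common ancestor of the component's labels *)
Definition is_croot (v : V) : bool :=
  match r with
  | None => false
  | Some rho => kept v &&
      [forall x, connect fe v (lab x) ==> between tr (lab rho) (lab x) v]
  end.

(* vertices of the forced contraction *)
Definition essential (v : V) : bool :=
  kept v && [|| v \in codom lab, is_croot v | is_median v].

(* adjacency in the forced contraction *)
Definition cadj (u w : V) : bool :=
  [&& essential u, essential w, u != w, connect fe u w &
      [forall v, [&& between fe u w v, v != u & v != w] ==> ~~ essential v]].

Definition lord : nat :=
  #|[set [set y | connect fe (lab x) (lab y)] | x : X]|.

Definition is_xforest : Prop :=
  [/\ symmetric tr, irreflexive tr,
      (* the underlying graph is a tree: connected, and every edge a bridge *)
      (forall u v, connect tr u v) &
      (forall u v, tr u v ->
         ~~ connect (fun a b => tr a b &&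
               ~~ (((a == u) && (b == v)) || ((a == v) && (b == u)))) u v)]
  /\ [/\ injective lab,
      (forall v, (deg tr v <= 1) = (v \in codom lab)) &
      (forall v, v \notin codom lab -> 3 <= deg tr v)]
  /\ [/\
      (forall u v, fe u v -> tr u v), symmetric fe &
      (forall u v, fe u v -> exists x, connect fe u (lab x))].

End Graph.
Arguments kept {X} G v.
Arguments is_median {X} G v.
Arguments is_croot {X} r G v.
Arguments essential {X} r G v.
Arguments cadj {X} r G u w.
Arguments lord {X} G.
Arguments is_xforest {X} G.

Definition fc_iso (X : finType) (r : option X) (G1 G2 : lgraph X) : Prop :=
  exists (phi : lV G1 -> lV G2) (psi : lV G2 -> lV G1),
    [/\ (forall v, essential r G1 v -> essential r G2 (phi v) /\ psi (phi v) = v),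
        (forall w, essential r G2 w -> essential r G1 (psi w) /\ phi (psi w) = w),
        (forall x, phi (llab G1 x) = llab G2 x),
        (forall u v, essential r G1 u -> essential r G1 v ->
           cadj r G2 (phi u) (phi v) = cadj r G1 u v) &
        (forall v, essential r G1 v -> is_croot r G2 (phi v) = is_croot r G1 v)].

(* F' is a subforest of F: up to forced contraction, F' is isomorphic to F
   with some edges deleted *)
Definition subforest (X : finType) (r : option X) (F' F : lgraph X) : Prop :=
  exists f' : rel (lV F),
    [/\ (forall u v, f' u v -> lfe F u v), symmetric f' &
        fc_iso r F' (@LGraph X (lV F) (ltr F) f' (llab F))].

Fixpoint all_lg (X : finType) (P : lgraph X -> Prop) (Fs : seq (lgraph X)) : Prop :=
  match Fs with
  | [::] => True
  | G :: Fs' => P G /\ all_lg P Fs'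
  end.

Definition agreement (X : finType) (r : option X) (Fs : seq (lgraph X))
    (F : lgraph X) : Prop :=
  is_xforest F /\ all_lg (subforest r F) Fs.

Definition maximum_af (X : finType) (r : option X) (Fs : seq (lgraph X))
    (F : lgraph X) : Prop :=
  agreement r Fs F /\ forall G, agreement r Fs G -> lord F <= lord G.

Definition maximal_af (X : finType) (r : option X) (F1 F2 F : lgraph X) : Prop :=
  agreement r [:: F1; F2] F /\
  ~ (exists G, [/\ agreement r [:: F1; F2] G, subforest r F G & lord G < lord F]).

(* Main.v *)
Require Import Defs.
From mathcomp Require Import all_boot.
From Stdlib Require Import Classical.
Set Implicit Arguments. Unset Strict Implicit. Unset Printing Implicit Defensive.


Definition rmE {T : eqType} (e : rel T) (u v : T) : rel T :=
  fun a b => e a b && ~~ (((a == u) && (b == v)) || ((a == v) && (b == u))).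
Definition acyc {T : finType} (e : rel T) :=
  forall u v, e u v -> ~~ connect (rmE e u v) u v.

Lemma acyc_sub (T : finType) (e e' : rel T) :
  (forall a b, e' a b -> e a b) -> acyc e -> acyc e'.
Proof.
move=> sub ac u v /sub euv; apply/negP => C; move/negP: (ac u v euv); apply.
apply: connect_sub C => a b /andP[/sub eab nab]; apply: connect1; exact/andP.
Qed.

Lemma mem_split (T : eqType) (x : T) (s : seq T) :
  x \in s -> exists s1 s2, s = s1 ++ x :: s2.
Proof. by case/splitPr=> s1 s2; exists s1, s2. Qed.

Lemma avoid_sym (T : finType) (e : rel T) v : symmetric e -> symmetric (avoid e v).
Proof. by move=> es a b; rewrite /avoid es; case: (a != v); case: (b != v); rewrite ?andbF. Qed.

Lemma rmE_sym (T : finType) (e : rel T) u v : symmetric e -> symmetric (rmE e u v).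
Proof.
move=> es a b; rewrite /rmE es.
by case: (a == u); case: (b == v); case: (a == v); case: (b == u).
Qed.

Lemma between_connect (T : finType) (e : rel T) u w v :
  between e u w v -> connect e u w.
Proof. by case/andP. Qed.

Lemma between_uu (T : finType) (e : rel T) u v : between e u u v -> v = u.
Proof.
by case/andP=> _; rewrite connect0 orbF orbb => /eqP.
Qed.

Lemma between_l (T : finType) (e : rel T) u w : connect e u w -> between e u w u.
Proof. by move=> c; rewrite /between c eqxx. Qed.
Lemma between_r (T : finType) (e : rel T) u w : connect e u w -> between e u w w.
Proof. by move=> c; rewrite /between c eqxx orbT. Qed.

Lemma between_sym (T : finType) (e : rel T) u w v :
  symmetric e -> between e u w v = between e w u v.
Proof.
move=> es; rewrite /between (sym_connect_sym es) (sym_connect_sym (avoid_sym v es)).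
by rewrite [(v == u) || _]orbA [(v == u) || _]orbC -orbA.
Qed.

Lemma path_notin (T : finType) (e : rel T) v x s :
  v \notin x :: s -> path e x s -> path (avoid e v) x s.
Proof.
elim: s x => [//|a s IH] x; rewrite !inE negb_or => /andP[nx]; rewrite negb_or => /andP[na ns].
case/andP=> exa ps; rewrite /= IH ?inE ?negb_or ?na //=.
by rewrite /avoid exa (eq_sym x) (eq_sym a) nx na.
Qed.

Lemma avoid_notin (T : finType) (e : rel T) v x s :
  path (avoid e v) x s -> v \notin s.
Proof.
elim: s x => [//|a s IH] x /= /andP[/and3P[_ _ av] ps].
by rewrite inE negb_or eq_sym av (IH a).
Qed.

Lemma path_avoid_sub (T : finType) (e : rel T) v x s :
  path (avoid e v) x s -> path e x s.
Proof. by apply: sub_path => a b /andP[]. Qed.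

Lemma path_rm (T : eqType) (e : rel T) u v x s :
  u \notin x :: s -> path e x s -> path (rmE e u v) x s.
Proof.
move=> nu; apply: (@sub_in_path _ (predC1 u)); last first.
  by apply/allP => y yi /=; apply: contraNneq nu => <-.
move=> a b /= au bu eab; rewrite /rmE eab /= negb_or.
by rewrite (negbTE au) (negbTE bu) andbF.
Qed.

Lemma spath (T : finType) (e : rel T) u w :
  connect e u w -> exists p, [/\ path e u p, uniq (u :: p) & last u p = w].
Proof.
case/connectP=> p pp ->; case: (shortenP pp) => p' pp' up' _.
by exists p'.
Qed.

Section Tree.
Variables (T : finType) (e : rel T).
Hypotheses (esym : symmetric e) (eac : acyc e).

Lemma upath p q u : path e u p -> uniq (u :: p) -> path e u q -> uniq (u :: q) ->
  last u p = last u q -> p = q.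
Proof.
elim: p u q => [|a p IH] u [|b q] //=.
- move=> _ _ _ /andP[nu _] Eu; move: (mem_last b q); rewrite -Eu.
  by move=> ui; move: nu; rewrite ui.
- move=> _ /andP[nu _] _ _ Eu; move: (mem_last a p); rewrite Eu.
  by move=> ui; move: nu; rewrite ui.
case/andP=> eua pp /andP[nua up] /andP[eub pq] /andP[nub uq] El.
have [ab|ab] := eqVneq a b.
  by subst b; rewrite (IH a q pp up pq uq El).
exfalso; move/negP: (eac eua); apply.
have c1 : connect (rmE e u a) a (last a p).
  by apply/connectP; exists p => //; apply: path_rm.
have c2 : connect (rmE e u a) b (last b q).
  by apply/connectP; exists q => //; apply: path_rm.
rewrite (sym_connect_sym (rmE_sym u a esym)).
apply: (connect_trans c1); rewrite El.
rewrite (sym_connect_sym (rmE_sym u a esym)) in c2.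
apply: (connect_trans c2); apply: connect1.
rewrite /rmE esym eub /= negb_or; apply/andP; split.
  by rewrite negb_and; apply/orP; left; apply: contraNneq nub => ->; rewrite inE eqxx.
by rewrite eq_sym (negbTE ab).
Qed.

Lemma BE u w v p : between e u w v -> path e u p -> last u p = w -> v \in u :: p.
Proof.
case/andP=> _; case/or3P=> [/eqP->|/eqP->|nc] pp lp; first by rewrite inE eqxx.
  by rewrite -lp mem_last.
apply/negPn/negP => nv; move/negP: nc; apply; apply/connectP; exists p => //.
exact: path_notin.
Qed.

Lemma BI u p v : path e u p -> uniq (u :: p) -> v \in u :: p -> between e u (last u p) v.
Proof.
move=> pp up vi; rewrite /between; apply/andP; split.
  by apply/connectP; exists p.
have [_|vu] := eqVneq v u; first by [].
have [_|vw] := eqVneq v (last u p); first by [].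
rewrite /=; apply/negP => /connectP[q pq lq].
move: lq; case: (shortenP pq) => q' pq' uq' _ lq'.
have E : q' = p.
  by apply: (upath (path_avoid_sub pq') uq' pp up); rewrite -lq'.
move: (avoid_notin pq'); rewrite E; move: vi; rewrite inE (negbTE vu) /= => ->.
by [].
Qed.

Lemma Bconn u w v : between e u w v -> connect e u v.
Proof.
move=> b; case: (spath (between_connect b)) => p [pp up lp].
exact: (path_connect pp (BE b pp lp)).
Qed.

Lemma Bconn2 u w v : between e u w v -> connect e v w.
Proof.
rewrite between_sym // => b; rewrite (sym_connect_sym esym); exact: Bconn b.
Qed.

Lemma PRE x s s1 y s2 : path e x s -> uniq (x :: s) -> x :: s = s1 ++ y :: s2 ->
  [/\ path e x (behead (rcons s1 y)), uniq (x :: behead (rcons s1 y)),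
      last x (behead (rcons s1 y)) = y, x :: behead (rcons s1 y) = rcons s1 y
    & uniq (rcons s1 y ++ s2)].
Proof.
move=> pp up E.
have U : uniq (rcons s1 y ++ s2) by rewrite cat_rcons -E.
have E2 : x :: behead (rcons s1 y) = rcons s1 y.
  by case: s1 E {U} => [|a s1] /= [->].
rewrite E2; split => //.
- case: s1 E {U E2} => [|a s1] /= [ea es]; first by [].
  subst; move: pp; rewrite cat_path rcons_path => /andP[-> /=].
  by case/andP.
- by move: U; rewrite cat_uniq => /andP[].
- by case: s1 E {U E2} => [|a s1] /= [-> _] //; rewrite last_rcons.
Qed.

Lemma SUF x s s1 y s2 : path e x s -> uniq (x :: s) -> x :: s = s1 ++ y :: s2 ->
  [/\ path e y s2, uniq (y :: s2) & last y s2 = last x s].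
Proof.
move=> pp up E.
have U : uniq (s1 ++ y :: s2) by rewrite -E.
split.
- case: s1 E {U} => [|a s1] /= [ea es]; first by subst.
  by subst; move: pp; rewrite cat_path => /andP[_ /=] /andP[].
- by move: U; rewrite cat_uniq => /and3P[].
- by rewrite -[last x s]/(last x (x :: s)) E last_cat.
Qed.

Lemma uniq_cat_notin (s1 s2 : seq T) x : uniq (s1 ++ s2) -> x \in s2 -> x \notin s1.
Proof.
rewrite cat_uniq => /and3P[_ /hasPn H _] xi; exact: H.
Qed.

Lemma T5 u w v t : between e u w v -> between e u v t -> between e u w t.
Proof.
move=> b1 b2; case: (spath (between_connect b1)) => p [pp up lp].
move: (BE b1 pp lp); rewrite inE; case/orP => [/eqP vu|vi].
  by subst v; rewrite (between_uu b2) between_l // (between_connect b1).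
case: (mem_split vi) => p1 [p2 E].
have EE : u :: p = (u :: p1) ++ v :: p2 by rewrite E.
have [P1 U1 L1 E1 _] := PRE pp up EE.
have ti := BE b2 P1 L1.
rewrite -lp; apply: BI => //; move: ti; rewrite E1 /= -cats1 E.
by rewrite !inE mem_cat mem_cat !inE; case/orP => [->|/orP[->|->]]; rewrite ?orbT.
Qed.

Lemma T6 u w v : between e u w v -> between e u v w -> v = w.
Proof.
move=> b1 b2; case: (spath (between_connect b1)) => p [pp up lp].
move: (BE b1 pp lp); rewrite inE; case/orP => [/eqP vu|vi].
  by subst v; rewrite (between_uu b2).
case: (mem_split vi) => p1 [p2 E].
have EE : u :: p = (u :: p1) ++ v :: p2 by rewrite E.
have [P1 U1 L1 E1 U2] := PRE pp up EE. clear EE.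
have wi := BE b2 P1 L1.
move: lp; rewrite E last_cat /=; case: p2 E U2 => [|a p2] E U2 /= lp //.
have : w \in a :: p2 by rewrite -lp mem_last.
move/(uniq_cat_notin U2); rewrite -E1; by rewrite wi.
Qed.

Lemma T9 a c m p : between e a c m -> between e a m p -> between e p c m.
Proof.
move=> b1 b2; case: (spath (between_connect b1)) => P [pp up lp].
move: (BE b1 pp lp); rewrite inE; case/orP => [/eqP ma|mi].
  subst m; rewrite (between_uu b2); exact: between_l (between_connect b1).
case: (mem_split mi) => P1 [P2 E].
have EE : a :: P = (a :: P1) ++ m :: P2 by rewrite E.
have [Q1 U1 L1 E1 _] := PRE pp up EE.
have pi := BE b2 Q1 L1.
move: pi; rewrite E1 mem_rcons in_cons; case/orP => [/eqP pm|pi].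
  subst p; rewrite between_l //; rewrite -lp; apply/connectP.
  have [S1 _ S3] := SUF pp up EE.
  by exists P2.
case: (mem_split pi) => R1 [R2 E2].
have E3 : a :: P = R1 ++ p :: (R2 ++ m :: P2) by rewrite E -cat_cons E2 -catA.
have [S1 S2 S3] := SUF pp up E3.
rewrite -lp -S3; apply: BI => //.
by rewrite inE mem_cat inE eqxx !orbT.
Qed.

Lemma T4 x y v z : between e x y v -> connect e x z -> between e x z v \/ between e z y v.
Proof.
move=> b cxz; have cxy := between_connect b.
have czy : connect e z y.
  by apply: connect_trans cxy; rewrite (sym_connect_sym esym).
case: (spath cxz) => q [pq uq lq]; case: (spath czy) => s [ps us ls].
have pqs : path e x (q ++ s) by rewrite cat_path pq lq.
have Lq : last x (q ++ s) = y by rewrite last_cat lq ls.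
move: Lq; case: (shortenP pqs) => p' pp' up' sub Lp'.
move: (BE b pp' Lp').
rewrite inE; case/orP => [/eqP ->|vi]; first by left; apply: between_l.
move: (sub _ vi); rewrite mem_cat; case/orP => vi'.
  by left; rewrite -lq; apply: BI; rewrite // inE vi' orbT.
by right; rewrite -ls; apply: BI; rewrite // inE vi' orbT.
Qed.

Lemma T7 x y z : connect e x y -> connect e x z ->
  exists m, [/\ between e x y m, between e y z m & between e x z m].
Proof.
move=> cxy cxz; case: (spath cxy) => P [pP uP lP].
have czx : connect e z x by rewrite (sym_connect_sym esym).
case: (spath czx) => S [pS uS lS].
set t := z :: S.
have ht : has (mem (x :: P)) t.
  by apply/hasP; exists x; [rewrite /t -{1}lS mem_last | exact: mem_head].
set i := find (mem (x :: P)) t.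
have isz : i < size t by rewrite -has_find.
set m := nth x t i.
have mP : m \in x :: P by exact: (nth_find x ht).
have mt : m \in t by exact: mem_nth.
have EE : z :: S = take i t ++ m :: drop i.+1 t by rewrite -drop_nth // cat_take_drop.
have [Q1 U1 L1 E1 U2] := PRE pS uS EE.
have nT1 : ~~ has (mem (x :: P)) (take i t) by rewrite has_take // ltnn.
case: (mem_split mP) => R1 [R2 ER].
have [S1 S2 S3] := SUF pP uP ER.
set W := behead (rcons (take i t) m) ++ R2.
have pW : path e z W by rewrite /W cat_path Q1 L1.
have EW : z :: W = take i t ++ m :: R2 by rewrite /W -cat_cons E1 cat_rcons.
have uW : uniq (z :: W).
  rewrite EW cat_uniq S2 andbT.
  move: U2; rewrite cat_uniq rcons_uniq => /andP[/andP[mT1 ->] _] /=.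
  rewrite negb_or mT1 /=; apply/hasPn => w wR2; apply/negP => wT1.
  move/hasPn: nT1 => /(_ w wT1); rewrite /= ER mem_cat inE wR2 !orbT.
  by [].
exists m; split.
- by rewrite -lP; apply: BI.
- rewrite between_sym // -lP -S3.
  have -> : last m R2 = last z W by rewrite /W last_cat L1.
  by apply: BI; rewrite // EW mem_cat inE eqxx orbT.
- by rewrite between_sym // -lS; apply: BI.
Qed.

End Tree.

Section Tree2.
Variables (T : finType) (e e' : rel T).
Hypotheses (esym : symmetric e) (eac : acyc e) (e'sym : symmetric e')
  (sub : forall a b, e' a b -> e a b).

Lemma T8 u w v : connect e' u w -> between e' u w v = between e u w v.
Proof.
have eac' : acyc e' := acyc_sub sub eac.
move=> c; case: (spath c) => p [pp up lp].
have pp2 : path e u p by apply: sub_path pp => a b /sub.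
apply/idP/idP => b.
  by rewrite -lp; apply: BI => //; exact: (BE b pp lp).
by rewrite -lp; apply: BI => //; exact: (BE b pp2 lp).
Qed.

Lemma T8b u w v : between e' u w v = connect e' u w && between e u w v.
Proof.
case c: (connect e' u w); first by rewrite T8.
by rewrite /between c.
Qed.

Lemma connect_subr u w : connect e' u w -> connect e u w.
Proof. by apply: connect_sub => a b /sub /connect1. Qed.

End Tree2.


Definition good (X : finType) (L : lgraph X) :=
  [/\ symmetric (ltr L), acyc (ltr L), (forall u v, lfe L u v -> ltr L u v) & symmetric (lfe L)].

Section Iso.
Variables (V1 V2 : finType) (e1 : rel V1) (e2 : rel V2) (E1 : pred V1) (E2 : pred V2)
  (phi : V1 -> V2).
Hypotheses (he1 : forall a b, e1 a b -> E1 a /\ E1 b)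
  (hphi : forall a, E1 a -> E2 (phi a))
  (hrel : forall a b, E1 a -> E1 b -> e2 (phi a) (phi b) = e1 a b).

Lemma iso_path a p : E1 a -> path e1 a p -> path e2 (phi a) (map phi p).
Proof.
elim: p a => [//|c p IH] a Ea /= /andP[eac pp].
have [_ Ec] := he1 eac.
by rewrite hrel // eac /= IH.
Qed.

Lemma iso_connect a b : E1 a -> connect e1 a b -> connect e2 (phi a) (phi b).
Proof.
move=> Ea /connectP[p pp ->]; apply/connectP; exists (map phi p).
  exact: iso_path.
by rewrite last_map.
Qed.
End Iso.

Section Iso2.
Variables (V1 V2 : finType) (e1 : rel V1) (e2 : rel V2) (E1 : pred V1) (E2 : pred V2)
  (phi : V1 -> V2) (psi : V2 -> V1).
Hypotheses (he1 : forall a b, e1 a b -> E1 a /\ E1 b)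
  (he2 : forall a b, e2 a b -> E2 a /\ E2 b)
  (hphi : forall a, E1 a -> E2 (phi a) /\ psi (phi a) = a)
  (hpsi : forall b, E2 b -> E1 (psi b) /\ phi (psi b) = b)
  (hrel : forall a b, E1 a -> E1 b -> e2 (phi a) (phi b) = e1 a b).

Lemma hrel2 a b : E2 a -> E2 b -> e1 (psi a) (psi b) = e2 a b.
Proof.
move=> Ea Eb; have [E1a <-] := hpsi Ea; have [E1b <-] := hpsi Eb.
rewrite hrel //; by rewrite (hpsi Ea).2 (hpsi Eb).2.
Qed.

Lemma iso_connect_iff a b : E1 a -> E1 b -> connect e2 (phi a) (phi b) = connect e1 a b.
Proof.
move=> Ea Eb; apply/idP/idP; last first.
  exact: (iso_connect he1 hrel).
move=> c; have : connect e1 (psi (phi a)) (psi (phi b)).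
  exact: (iso_connect he2 hrel2 (hphi Ea).1).
by rewrite (hphi Ea).2 (hphi Eb).2.
Qed.

Lemma phi_inj a b : E1 a -> E1 b -> (phi a == phi b) = (a == b).
Proof.
move=> Ea Eb; apply/eqP/eqP => [E|->//].
by rewrite -(hphi Ea).2 -(hphi Eb).2 E.
Qed.
End Iso2.

Lemma iso_between (V1 V2 : finType) (e1 : rel V1) (e2 : rel V2) (E1 : pred V1) (E2 : pred V2)
  (phi : V1 -> V2) (psi : V2 -> V1) :
  (forall a b, e1 a b -> E1 a /\ E1 b) ->
  (forall a b, e2 a b -> E2 a /\ E2 b) ->
  (forall a, E1 a -> E2 (phi a) /\ psi (phi a) = a) ->
  (forall b, E2 b -> E1 (psi b) /\ phi (psi b) = b) ->
  (forall a b, E1 a -> E1 b -> e2 (phi a) (phi b) = e1 a b) ->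
  forall u w v, E1 u -> E1 w -> E1 v ->
  between e2 (phi u) (phi w) (phi v) = between e1 u w v.
Proof.
move=> he1 he2 hphi hpsi hrel u w v Eu Ew Ev.
rewrite /between (iso_connect_iff he1 he2 hphi hpsi hrel) //.
rewrite !(phi_inj hphi) //.
congr (_ && [|| _, _ | ~~ _]).
apply: (@iso_connect_iff _ _ (avoid e1 v) (avoid e2 (phi v)) E1 E2 phi psi) => //.
- by move=> a b /and3P[/he1].
- by move=> a b /and3P[/he2].
- move=> a b Ea Eb; rewrite /avoid hrel // !(phi_inj hphi) //.
Qed.


Section Decomp.
Variables (X : finType) (r : option X) (L : lgraph X).
Hypothesis gL : good L.
Local Notation fe := (lfe L).
Local Notation ess := (essential r L).
Local Notation cad := (cadj r L).

Lemma fesym : symmetric fe. Proof. by case: gL. Qed.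
Lemma feac : acyc fe. Proof. by case: gL => _ ac sub _; exact: acyc_sub sub ac. Qed.

Lemma cad_ess p q : cad p q -> ess p /\ ess q.
Proof. by case/and5P. Qed.
Lemma cad_conn p q : cad p q -> connect fe p q.
Proof. by case/and5P. Qed.
Lemma cad_avoid p q v : cad p q -> ess v -> v != p -> v != q -> connect (avoid fe v) p q.
Proof.
case/and5P=> _ _ _ c /forallP /(_ v) H ev vp vq.
move: H; rewrite vp vq ev /= andbT implybF /between c /= (negbTE vp) (negbTE vq) /=.
by rewrite negbK.
Qed.

Lemma btw_sub u w t s : between fe u w t -> between fe u t s -> between fe u w s.
Proof. by move=> b; apply: T5 b; [exact: fesym | exact: feac]. Qed.

Lemma btw_sub2 u w t s : between fe u w t -> between fe t w s -> between fe u w s.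
Proof.
move=> b b2.
rewrite (between_sym _ _ _ fesym) in b; rewrite (between_sym _ _ _ fesym) in b2.
rewrite (between_sym _ _ _ fesym); exact: (T5 fesym feac b b2).
Qed.

Lemma D1 n u w : #|[pred t | between fe u w t]| <= n -> ess u -> ess w -> connect fe u w ->
  connect [rel p q | cad p q && between fe u w p && between fe u w q] u w.
Proof.
elim: n u w => [|n IH] u w.
  move=> H _ _ c; move: H; rewrite leqn0 => /eqP/card0_eq/(_ u).
  by rewrite inE (between_l c).
move=> H eu ew c.
have [->|uw] := eqVneq u w; first exact: connect0.
case: (pickP [pred t | [&& ess t, between fe u w t, t != u & t != w]]) => [t|none].
  case/and4P=> et b tu tw.
  have cut : connect fe u t := Bconn b.
  have ctw : connect fe t w := Bconn2 fesym b.
  have lt1 : #|[pred s | between fe u t s]| < #|[pred s | between fe u w s]|.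
    apply: proper_card; apply/properP; split; first by apply/subsetP => s; rewrite !inE; exact: btw_sub.
    exists w; first by rewrite inE; exact: between_r.
    rewrite inE; apply/negP => b2; move/eqP: tw; apply; exact: (T6 b b2).
  have lt2 : #|[pred s | between fe t w s]| < #|[pred s | between fe u w s]|.
    apply: proper_card; apply/properP; split; first by apply/subsetP => s; rewrite !inE; exact: btw_sub2.
    exists u; first by rewrite inE; exact: between_l.
    rewrite inE; apply/negP => b2; move/eqP: tu; apply.
    rewrite (between_sym _ _ _ fesym) in b2; rewrite (between_sym _ _ _ fesym) in b.
    exact: (T6 b b2).
  have C1 := IH u t (leq_trans (ltnSn _) (leq_trans lt1 H)) eu et cut.
  have C2 := IH t w (leq_trans (ltnSn _) (leq_trans lt2 H)) et ew ctw.
  apply: connect_trans (_ : connect _ t w).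
    apply: connect_sub C1 => p q /= /andP[/andP[cpq bp] bq]; apply: connect1.
    by rewrite /= cpq (btw_sub b bp) (btw_sub b bq).
  apply: connect_sub C2 => p q /= /andP[/andP[cpq bp] bq]; apply: connect1.
  by rewrite /= cpq (btw_sub2 b bp) (btw_sub2 b bq).
apply: connect1; rewrite /= (between_l c) (between_r c) !andbT.
apply/and5P; split => //; apply/forallP => v; apply/implyP => /and3P[b vu vw].
apply/negP => ev; move: (none v); by rewrite /= ev b vu vw.
Qed.

Lemma D1' u w : ess u -> ess w -> connect fe u w ->
  connect [rel p q | cad p q && between fe u w p && between fe u w q] u w.
Proof. exact: D1. Qed.

Lemma D3 u w : ess u -> ess w -> connect cad u w = connect fe u w.
Proof.
move=> eu ew; apply/idP/idP.
  by apply: connect_sub => p q /cad_conn.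
move/(D1' eu ew); apply: connect_sub => p q /andP[/andP[c _] _]; exact: connect1.
Qed.

Lemma D2 u w v : ess u -> ess w -> ess v -> between cad u w v = between fe u w v.
Proof.
move=> eu ew ev; rewrite /between D3 //.
case c: (connect fe u w) => //=.
have [_|vu] := eqVneq v u; first by [].
have [_|vw] := eqVneq v w; first by [].
rewrite /=.
congr negb; apply/idP/idP.
  apply: connect_sub => p q /and3P[cpq pv qv]; apply: cad_avoid => //.
    by rewrite eq_sym.
  by rewrite eq_sym.
move=> ca.
have nb : ~~ between fe u w v by rewrite /between c (negbTE vu) (negbTE vw) ca.
move: (D1' eu ew c); apply: connect_sub => p q /andP[/andP[cpq bp] bq].
apply: connect1; rewrite /avoid cpq /=.
apply/andP; split; apply: contraNneq nb => <- //.
Qed.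

Lemma lab_ess x : ess (llab L x).
Proof.
rewrite /essential /kept; apply/andP; split.
  by apply/existsP; exists x; apply/existsP; exists x; rewrite /between connect0 eqxx.
by rewrite codom_f.
Qed.

End Decomp.


Definition restr (X : finType) (G : lgraph X) (f : rel (lV G)) : lgraph X :=
  @LGraph X (lV G) (ltr G) f (llab G).
Arguments restr {X} G f.

Lemma good_restr (X : finType) (G : lgraph X) (f : rel (lV G)) :
  good G -> (forall u v, f u v -> lfe G u v) -> symmetric f -> good (restr G f).
Proof. by case=> s a sub _ fsub fs; split => // u v /fsub /sub. Qed.

Lemma good_xforest (X : finType) (G : lgraph X) : is_xforest G -> good G.
Proof. by case=> [[s _ _ a] [_ [sub fs _]]]; split. Qed.

Lemma conn_sym_trans (T : finType) (e : rel T) a b u w :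
  symmetric e -> connect e a u -> connect e b w -> connect e u w = connect e a b.
Proof.
move=> es au bw; have cs := sym_connect_sym es.
apply/idP/idP => c.
  apply: connect_trans au _; apply: connect_trans c _; by rewrite cs.
apply: connect_trans bw; apply: connect_trans c; by rewrite cs.
Qed.

Section Gen.
Variables (X : finType) (r : option X) (L : lgraph X).
Hypothesis gL : good L.
Local Notation fe := (lfe L).
Local Notation tr := (ltr L).
Local Notation lab := (llab L).
Local Notation ess := (essential r L).

Lemma trsym : symmetric tr. Proof. by case: gL. Qed.
Lemma trac : acyc tr. Proof. by case: gL. Qed.
Lemma fesub u v : fe u v -> tr u v. Proof. by case: gL => _ _ s _; apply: s. Qed.

Lemma intersect a b c d p :
  between fe (lab a) (lab b) p -> between fe (lab c) (lab d) p ->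
  exists m, [/\ ess m, between fe (lab a) (lab b) m & between fe (lab c) (lab d) m].
Proof.
have fs := fesym gL; have fa := feac gL.
move=> b1 b2.
have cab := between_connect b1.
have cac : connect fe (lab a) (lab c).
  apply: connect_trans (Bconn b1) _; rewrite (sym_connect_sym fs); exact: Bconn b2.
case: (T7 fs fa cab cac) => m [m1 m2 m3].
have em : ess m.
  apply/andP; split.
    by apply/existsP; exists a; apply/existsP; exists b.
  apply/orP; right; apply/orP; right.
  by apply/existsP; exists a; apply/existsP; exists b; apply/existsP; exists c; apply/and3P.
exists m; split => //.
have cam : connect fe (lab a) m := Bconn m1.
have pcm : between fe p (lab c) m.
  case: (T4 fs fa b1 cam) => bb.
    exact: (T9 fs fa m3 bb).
  rewrite (between_sym _ _ _ fs) in bb.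
  exact: (T9 fs fa m2 bb).
rewrite (between_sym _ _ _ fs) in pcm.
exact: (T5 fs fa b2 pcm).
Qed.

Lemma ess_kept v : ess v -> kept L v. Proof. by case/andP. Qed.

Section Restr.
Variable f : rel (lV L).
Hypotheses (fsub : forall u v, f u v -> fe u v) (fsym : symmetric f).

Lemma btw_restr u w v : between f u w v = connect f u w && between fe u w v.
Proof. exact: (T8b (fesym gL) (feac gL) fsym fsub). Qed.

Lemma kept_restr v : kept (restr L f) v -> kept L v.
Proof.
case/existsP=> x /existsP[y]; rewrite /= btw_restr => /andP[_ b].
by apply/existsP; exists x; apply/existsP; exists y.
Qed.

Lemma ess_restr v : essential r (restr L f) v -> ess v.
Proof.
have trs := trsym; have tra := trac; have fs := fesym gL; have fa := feac gL.
case/andP=> k; rewrite /essential (kept_restr k) /=.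
case/or3P=> [->//|cr|md]; last first.
  apply/orP; right; apply/orP; right.
  move: md => /existsP[a /existsP[b /existsP[c]]]; rewrite /= !btw_restr.
  case/and3P=> /andP[_ b1] /andP[_ b2] /andP[_ b3].
  by apply/existsP; exists a; apply/existsP; exists b; apply/existsP; exists c; apply/and3P.
case Cr: (is_croot r L v); first by rewrite orbT.
move: cr Cr; rewrite /is_croot; case: r => [rho|//].
case/andP=> _ /forallP cr; rewrite (kept_restr k) /=.
move/negbT; rewrite negb_forall => /existsP[z]; rewrite negb_imply => /andP[cvz nb].
move: k => /existsP[x /existsP[y]]; rewrite /= btw_restr => /andP[cxy bxy].
have cvx : connect f v (lab x).
  by rewrite (sym_connect_sym fsym); apply: (@Bconn _ _ _ (lab y)); rewrite btw_restr cxy bxy.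
have cvy : connect f v (lab y).
  by apply: (@Bconn2 _ _ fsym (lab x)); rewrite btw_restr cxy bxy.
have bx := implyP (cr x) cvx; have by_ := implyP (cr y) cvy.
have cfvx := connect_subr fsub cvx; have cfvy := connect_subr fsub cvy.
apply/orP; right.
apply/existsP; exists x; apply/existsP; exists y; apply/existsP; exists z.
have cxz : connect fe (lab x) (lab z).
  by apply: connect_trans cvz; rewrite (sym_connect_sym fs).
have cyz : connect fe (lab y) (lab z).
  by apply: connect_trans cvz; rewrite (sym_connect_sym fs).
have crz : connect tr (lab rho) (lab z).
  apply: connect_trans (connect_subr fesub cyz); exact: between_connect by_.
rewrite bxy /= (T8 trs tra fs fesub _ cyz) (T8 trs tra fs fesub _ cxz).
apply/andP; split.
  case: (T4 trs tra by_ crz) => bb; first by rewrite bb in nb.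
  by rewrite between_sym.
case: (T4 trs tra bx crz) => bb; first by rewrite bb in nb.
by rewrite between_sym.
Qed.
End Restr.

Lemma ANC rho c v x : is_croot (Some rho) L c -> kept L v -> connect fe v (lab x) ->
  connect fe c (lab x) -> between tr (lab rho) (lab x) v = between fe c (lab x) v.
Proof.
have trs := trsym; have tra := trac; have fs := fesym gL; have fa := feac gL.
move=> /andP[kc /forallP cr] kv cvx ccx.
have bc := implyP (cr x) ccx.
apply/idP/idP => b; last first.
  rewrite (T8 trs tra fs fesub _ ccx) in b.
  rewrite between_sym // in bc; rewrite between_sym //. rewrite between_sym // in b.
  exact: (T5 trs tra bc b).
have crc : connect tr (lab rho) c := Bconn bc.
case: (T4 trs tra b crc) => bb; last by rewrite (T8 trs tra fs fesub _ ccx).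
move: kv => /existsP[y /existsP[z bv]].
have cvy : connect fe v (lab y).
  by rewrite (sym_connect_sym fs); exact: Bconn bv.
have cvz : connect fe v (lab z) := Bconn2 fs bv.
have ccv : connect fe c v.
  by apply: connect_trans ccx _; rewrite (sym_connect_sym fs).
have byc := implyP (cr y) (connect_trans ccv cvy).
have bzc := implyP (cr z) (connect_trans ccv cvz).
have b1 : between tr v (lab y) c := T9 trs tra byc bb.
have b2 : between tr v (lab z) c := T9 trs tra bzc bb.
have cyz : connect fe (lab y) (lab z) := between_connect bv.
rewrite (T8 trs tra fs fesub _ cyz) in bv.
rewrite between_sym // in b1.
have b3 : between tr c (lab z) v := T9 trs tra bv b1.
rewrite between_sym // in b2; rewrite between_sym // in b3.
have E := T6 b2 b3; subst v.
exact: between_l.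
Qed.

Lemma CE rho x : (forall u v, connect tr u v) ->
  exists c, is_croot (Some rho) L c /\ connect fe c (lab x).
Proof.
have trs := trsym; have tra := trac; have fs := fesym gL; have fa := feac gL.
move=> trc.
pose P := [pred v | kept L v && connect fe v (lab x)].
have P0 : P (lab x).
  rewrite /= connect0 andbT; apply/existsP; exists x; apply/existsP; exists x.
  by rewrite /between connect0 eqxx.
pose F := fun v => #|[pred t | between tr (lab rho) v t]|.
case: (arg_minnP F P0) => c /andP[kc ccx] minc.
exists c; split => //; rewrite /is_croot kc /=.
apply/forallP => y; apply/implyP => ccy; apply/negPn/negP => nb.
case: (T7 trs tra (trc (lab rho) c) (trc (lab rho) (llab L y))) => m [m1 m2 m3].
have mc : m != c by apply: contraNneq nb => <-.
have bfm : between fe c (lab y) m by rewrite (T8 trs tra fs fesub _ ccy).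
have ccm : connect fe c m := Bconn bfm.
have Pm : P m.
  rewrite /= ; apply/andP; split; last first.
    by apply: connect_trans ccx; rewrite (sym_connect_sym fs).
  move: kc => /existsP[a /existsP[b bc]].
  have cay : connect fe (llab L a) (llab L y) := connect_trans (Bconn bc) ccy.
  case: (T4 fs fa bc cay) => bb.
    rewrite between_sym // in bb; rewrite between_sym // in bfm.
    have := T5 fs fa bb bfm; rewrite between_sym // => h.
    by apply/existsP; exists a; apply/existsP; exists y.
  rewrite between_sym // in bfm.
  have := T5 fs fa bb bfm => h.
  by apply/existsP; exists y; apply/existsP; exists b.
have := minc m Pm; rewrite /F leqNgt => /negP; apply.
apply: proper_card; apply/properP; split.
  by apply/subsetP => s; rewrite !inE => bs; exact: (T5 trs tra m1 bs).
exists c; rewrite !inE; first exact: between_r.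
apply/negP => bb; move/eqP: mc; apply; exact: (esym (T6 bb m1)).
Qed.

End Gen.


Section Transfer.
Variables (X : finType) (r : option X) (L1 L2 : lgraph X).
Hypotheses (g1 : good L1) (g2 : good L2) (trc1 : forall u v, connect (ltr L1) u v).
Variables (phi : lV L1 -> lV L2) (psi : lV L2 -> lV L1).
Local Notation fe1 := (lfe L1).
Local Notation fe2 := (lfe L2).
Local Notation lab1 := (llab L1).
Local Notation lab2 := (llab L2).
Local Notation E1 := (essential r L1).
Local Notation E2 := (essential r L2).
Hypotheses
  (H1 : forall v, E1 v -> E2 (phi v) /\ psi (phi v) = v)
  (H2 : forall w, E2 w -> E1 (psi w) /\ phi (psi w) = w)
  (H3 : forall x, phi (lab1 x) = lab2 x)
  (H4 : forall u v, E1 u -> E1 v -> cadj r L2 (phi u) (phi v) = cadj r L1 u v)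
  (H5 : forall v, E1 v -> is_croot r L2 (phi v) = is_croot r L1 v).

Lemma SI_btw u w v : E1 u -> E1 w -> E1 v ->
  between fe2 (phi u) (phi w) (phi v) = between fe1 u w v.
Proof.
move=> eu ew ev.
rewrite -(D2 (r:=r) g1) // -(D2 (r:=r) g2) ?(H1 eu).1 ?(H1 ew).1 ?(H1 ev).1 //.
apply: (iso_between (E1 := E1) (E2 := E2) (psi := psi)) => //.
- by move=> a b /cad_ess.
- by move=> a b /cad_ess.
Qed.

Lemma SI_conn u w : E1 u -> E1 w -> connect fe2 (phi u) (phi w) = connect fe1 u w.
Proof.
move=> eu ew.
rewrite -(D3 (r:=r) g1) // -(D3 (r:=r) g2) ?(H1 eu).1 ?(H1 ew).1 //.
apply: (iso_connect_iff (E1 := E1) (E2 := E2) (psi := psi)) => //.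
- by move=> a b /cad_ess.
- by move=> a b /cad_ess.
Qed.

Lemma LB x y v : E1 v -> between fe2 (lab2 x) (lab2 y) (phi v) = between fe1 (lab1 x) (lab1 y) v.
Proof. by move=> ev; rewrite -!H3 SI_btw // (lab_ess r L1). Qed.

Lemma LC x y : connect fe2 (lab2 x) (lab2 y) = connect fe1 (lab1 x) (lab1 y).
Proof. by rewrite -!H3 SI_conn // (lab_ess r L1). Qed.

Variable f : rel (lV L1).
Hypotheses (fsub : forall u v, f u v -> fe1 u v) (fsym : symmetric f).

Definition R1 x y := connect f (lab1 x) (lab1 y).

Definition h : rel (lV L2) := fun p q => fe2 p q && [exists x, exists y,
  [&& R1 x y, between fe2 (lab2 x) (lab2 y) p & between fe2 (lab2 x) (lab2 y) q]].

Lemma hsub u v : h u v -> fe2 u v. Proof. by case/andP. Qed.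
Lemma hsym : symmetric h.
Proof.
move=> p q; rewrite /h (fesym g2); congr (_ && _).
apply/existsP/existsP => [[x /existsP[y /and3P[a b c]]]|[x /existsP[y /and3P[a b c]]]];
  by exists x; apply/existsP; exists y; rewrite a b c.
Qed.

Lemma R1sym x y : R1 x y = R1 y x.
Proof. by rewrite /R1 (sym_connect_sym fsym). Qed.

Lemma Step x p q : (exists y1 z1, [/\ R1 x y1, R1 y1 z1 & between fe2 (lab2 y1) (lab2 z1) p]) ->
  h p q -> exists y1 z1, [/\ R1 x y1, R1 y1 z1 & between fe2 (lab2 y1) (lab2 z1) q].
Proof.
move=> [y1 [z1 [xy1 yz1 b1]]] /andP[_ /existsP[y2 /existsP[z2 /and3P[yz2 b2 b3]]]].
exists y2, z2; split => //.
case: (intersect r g2 b1 b2) => m [em m1 m2].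
have [ep Em] := H2 em.
rewrite -Em LB // in m1; rewrite -Em LB // in m2.
have c1 : connect f (lab1 y1) (psi m).
  apply: (@Bconn _ _ _ (lab1 z1)); rewrite (btw_restr g1 fsub fsym) m1 andbT; exact: yz1.
have c2 : connect f (lab1 y2) (psi m).
  apply: (@Bconn _ _ _ (lab1 z2)); rewrite (btw_restr g1 fsub fsym) m2 andbT; exact: yz2.
rewrite /R1; apply: connect_trans xy1 _; apply: connect_trans c1 _.
by rewrite (sym_connect_sym fsym).
Qed.

Lemma Inv_path x p s : path h s p ->
  (exists y1 z1, [/\ R1 x y1, R1 y1 z1 & between fe2 (lab2 y1) (lab2 z1) s]) ->
  (exists y1 z1, [/\ R1 x y1, R1 y1 z1 & between fe2 (lab2 y1) (lab2 z1) (last s p)]).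
Proof.
elim: p s => [|q p IH] s //= /andP[hsq pp] I; apply: IH pp _; exact: Step I hsq.
Qed.

Lemma IIa x y : connect h (lab2 x) (lab2 y) = R1 x y.
Proof.
apply/idP/idP.
  case/connectP=> p pp Ey.
  have I0 : exists y1 z1, [/\ R1 x y1, R1 y1 z1 & between fe2 (lab2 y1) (lab2 z1) (lab2 x)].
    by exists x, x; split; rewrite /R1 ?connect0 // /between connect0 eqxx.
  case: (Inv_path pp I0) => y1 [z1 [xy1 yz1]]; rewrite -Ey -(H3 y) LB ?(lab_ess r L1) // => b.
  have : connect f (lab1 y1) (lab1 y).
    by apply: (@Bconn _ _ _ (lab1 z1)); rewrite (btw_restr g1 fsub fsym) b andbT.
  by move=> c; rewrite /R1; apply: connect_trans xy1 c.
move=> Rxy.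
have Rxy2 : connect f (lab1 x) (lab1 y) := Rxy.
have c1 : connect fe2 (lab2 x) (lab2 y).
  rewrite LC; move: Rxy2; apply: connect_sub => a b /fsub; exact: connect1.
case: (spath c1) => p [pp up lp].
apply/connectP; exists p => //.
have AP : all [pred s | between fe2 (lab2 x) (lab2 y) s] (lab2 x :: p).
  apply/allP => s si; rewrite inE -lp; exact: (BI (fesym g2) (feac g2) pp up si).
move: AP pp; apply: sub_in_path.
move=> a b; rewrite !inE => ba bb fab; rewrite /h fab /=.
by apply/existsP; exists x; apply/existsP; exists y; rewrite Rxy ba bb.
Qed.

Local Notation M1 := (restr L1 f).
Local Notation M2 := (restr L2 h).

Lemma BT x y v : E1 v -> between h (lab2 x) (lab2 y) (phi v) = between f (lab1 x) (lab1 y) v.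
Proof.
move=> ev; rewrite (btw_restr g2 hsub hsym) (btw_restr g1 fsub fsym) IIa LB //.
Qed.

Lemma KEPT v : E1 v -> kept M2 (phi v) = kept M1 v.
Proof.
move=> ev; rewrite /kept; apply: eq_existsb => x; apply: eq_existsb => y; exact: BT.
Qed.

Lemma MED v : E1 v -> is_median M2 (phi v) = is_median M1 v.
Proof.
move=> ev; rewrite /is_median; apply: eq_existsb => a; apply: eq_existsb => b.
apply: eq_existsb => c; by rewrite /= !BT.
Qed.

Lemma COD v : E1 v -> (phi v \in codom lab2) = (v \in codom lab1).
Proof.
move=> ev; apply/codomP/codomP => [[x ex]|[x ex]]; exists x.
  by rewrite -(H1 ev).2 ex -H3 (H1 (lab_ess r L1 x)).2.
by rewrite ex H3.
Qed.

Lemma KL v : E1 v -> kept M1 v ->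
  exists x, connect f (lab1 x) v /\ connect h (lab2 x) (phi v).
Proof.
move=> ev /existsP[x /existsP[y b]]; exists x; split.
  exact: (@Bconn _ _ _ (lab1 y)).
apply: (@Bconn _ _ _ (lab2 y)); by rewrite BT.
Qed.

Lemma CT u w : E1 u -> E1 w -> kept M1 u -> kept M1 w ->
  connect h (phi u) (phi w) = connect f u w.
Proof.
move=> eu ew ku kw.
case: (KL eu ku) => x [cx1 cx2]; case: (KL ew kw) => y [cy1 cy2].
rewrite (conn_sym_trans hsym cx2 cy2) (conn_sym_trans fsym cx1 cy1).
exact: IIa.
Qed.

Lemma AI rho v z : r = Some rho -> E1 v -> connect fe1 v (lab1 z) ->
  between (ltr L2) (lab2 rho) (lab2 z) (phi v) = between (ltr L1) (lab1 rho) (lab1 z) v.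
Proof.
move=> Er ev cvz.
case: (CE g1 rho z trc1) => c [cr ccz].
have cr' : is_croot r L1 c by rewrite Er.
have ec : E1 c.
  by rewrite /essential cr' orbT andbT; move: cr; rewrite /is_croot => /andP[].
have cr2 : is_croot (Some rho) L2 (phi c) by rewrite -Er H5.
have kv2 : kept L2 (phi v) by case/andP: (H1 ev).1.
have cvz2 : connect fe2 (phi v) (lab2 z) by rewrite -H3 SI_conn // (lab_ess r L1).
have ccz2 : connect fe2 (phi c) (lab2 z) by rewrite -H3 SI_conn // (lab_ess r L1).
have kv1 : kept L1 v by case/andP: ev.
by rewrite (ANC g2 cr2 kv2 cvz2 ccz2) (ANC g1 cr kv1 cvz ccz) -H3 SI_btw // (lab_ess r L1).
Qed.

Lemma CROOT v : E1 v -> is_croot r M2 (phi v) = is_croot r M1 v.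
Proof.
move=> ev; rewrite /is_croot; case Er: r => [rho|//].
rewrite KEPT //; case kv: (kept M1 v) => //=.
apply: eq_forallb => z.
have kz : E1 (lab1 z) := lab_ess r L1 z.
rewrite -H3 CT // ?(lab_ess r L1) //; last first.
  by apply/existsP; exists z; apply/existsP; exists z; rewrite /between connect0 eqxx.
case cz: (connect f v (lab1 z)) => //=.
rewrite H3; apply: AI => //; apply: (connect_subr fsub); exact: cz.
Qed.

Lemma ESS v : E1 v -> essential r M2 (phi v) = essential r M1 v.
Proof.
move=> ev; rewrite /essential KEPT // CROOT // MED //.
by rewrite [phi v \in _]COD.
Qed.

Lemma CADJ u w : essential r M1 u -> essential r M1 w ->
  cadj r M2 (phi u) (phi w) = cadj r M1 u w.
Proof.
move=> eu ew; have eu1 := ess_restr g1 fsub fsym eu; have ew1 := ess_restr g1 fsub fsym ew.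
have ku : kept M1 u by case/andP: eu.
have kw : kept M1 w by case/andP: ew.
have inj : forall a b, E1 a -> E1 b -> (phi a == phi b) = (a == b).
  move=> a b ea eb; apply/eqP/eqP => [E|->//].
  by rewrite -(H1 ea).2 -(H1 eb).2 E.
have BT2 : forall t, E1 t -> between h (phi u) (phi w) (phi t) = between f u w t.
  move=> t et; rewrite (btw_restr g2 hsub hsym) (btw_restr g1 fsub fsym) CT //.
  by rewrite SI_btw.
rewrite /cadj ESS // ESS // inj // CT //.
congr [&& _, _, _, _ & _].
apply/forallP/forallP => H t.
  apply/implyP => /and3P[b tu tw]; apply/negP => et.
  have et1 := ess_restr g1 fsub fsym et.
  move: (H (phi t)); rewrite BT2 // inj // inj // b tu tw /= ESS // et.
  by [].
apply/implyP => /and3P[b tu tw]; apply/negP => et.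
have et2 := ess_restr g2 hsub hsym et.
have [et1 Et] := H2 et2.
rewrite -Et in b tu tw et.
rewrite BT2 // in b; rewrite inj // in tu; rewrite inj // in tw; rewrite ESS // in et.
by move: (H (psi t)); rewrite b tu tw et.
Qed.

Lemma transfer : fc_iso r M1 M2.
Proof.
exists phi, psi; split.
- move=> v ev; have e1 := ess_restr g1 fsub fsym ev.
  by split; [rewrite ESS | exact: (H1 e1).2].
- move=> w ew; have e2 := ess_restr g2 hsub hsym ew; have [e1 pw] := H2 e2.
  by split => //; rewrite -ESS // pw.
- exact: H3.
- exact: CADJ.
- move=> v ev; exact: CROOT (ess_restr g1 fsub fsym ev).
Qed.

End Transfer.


Lemma iso_trans (X : finType) (r : option X) (A B C : lgraph X) :
  fc_iso r A B -> fc_iso r B C -> fc_iso r A C.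
Proof.
case=> [p1 [q1 [A1 A2 A3 A4 A5]]] [p2 [q2 [B1 B2 B3 B4 B5]]].
exists (p2 \o p1), (q1 \o q2); split.
- move=> v ev; have [e1 E1] := A1 v ev; have [e2 E2] := B1 _ e1.
  by split => //=; rewrite E2 E1.
- move=> w ew; have [e1 E1] := B2 w ew; have [e2 E2] := A2 _ e1.
  by split => //=; rewrite E2 E1.
- by move=> x /=; rewrite A3 B3.
- move=> u v eu ev /=; rewrite B4 ?A4 //; [exact: (A1 u eu).1 | exact: (A1 v ev).1].
- by move=> v ev /=; rewrite B5 ?A5 //; exact: (A1 v ev).1.
Qed.

Lemma subforest_refl (X : finType) (r : option X) (F : lgraph X) :
  is_xforest F -> subforest r F F.
Proof.
case: F => V tr fe lab xF; exists fe; split => //.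
  by case: xF => _ [_ [_ ? _]].
by exists id, id; split.
Qed.

Lemma subforest_trans (X : finType) (r : option X) (A B C : lgraph X) :
  is_xforest B -> is_xforest C -> subforest r A B -> subforest r B C -> subforest r A C.
Proof.
move=> xB xC [f [fs fsy isoAB]] [g [gs gsy [phi [psi [H1 H2 H3 H4 H5]]]]].
have gB := good_xforest xB.
have gC := good_restr (good_xforest xC) gs gsy.
have trc : forall u v, connect (ltr B) u v by case: xB => [[_ _ ? _] _].
have T := transfer gB gC trc H1 H2 H3 H4 H5 fs fsy.
eexists; split; last exact: iso_trans isoAB T.
  move=> u v /hsub; exact: gs.
exact: (hsym gC f).
Qed.

Lemma ex_min_prop (P : nat -> Prop) : (exists n, P n) ->
  exists n, P n /\ forall m, P m -> n <= m.
Proof.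
case=> n; elim: n {-2}n (leqnn n) => [|k IH] n.
  rewrite leqn0 => /eqP-> P0; exists 0; split => // m _.
move=> nk Pn.
case: (classic (exists m, m < n /\ P m)) => [[m [mn Pm]]|none].
  apply: (IH m) => //; rewrite -ltnS; exact: leq_trans mn nk.
exists n; split => // m Pm; rewrite leqNgt; apply/negP => mn.
by apply: none; exists m.
Qed.

Unset Implicit Arguments.

Theorem lemma4p2 (X : finType) (r : option X) (F1 F2 : lgraph X)
    (Fs : seq (lgraph X)) (F : lgraph X) :
  is_xforest F1 -> is_xforest F2 -> all_lg is_xforest Fs ->
  maximum_af r [:: F1, F2 & Fs] F ->
  exists F' : lgraph X, maximal_af r F1 F2 F' /\ maximum_af r (F' :: Fs) F.
Proof.
move=> x1 x2 xs [[xF [sF1 [sF2 sFs]]] minF].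
pose S n := exists G, [/\ agreement r [:: F1; F2] G, subforest r F G & lord G = n].
have S0 : exists n, S n.
  exists (lord F), F; split; [exact: (conj xF (conj sF1 (conj sF2 I))) |
    exact: subforest_refl xF | by []].
case: (ex_min_prop S0) => n [[G [[xG [sG1 [sG2 _]]] sFG En]] minG].
exists G; split.
  split; first exact: (conj xG (conj sG1 (conj sG2 I))).
  case=> G' [[xG' [sG'1 [sG'2 _]]] sGG' lt].
  have : S (lord G').
    exists G'; split; [exact: (conj xG' (conj sG'1 (conj sG'2 I))) |
      exact: subforest_trans xG xG' sFG sGG' | by []].
  by move=> SG; have := minG _ SG; rewrite -En leqNgt lt.
split; first exact: (conj xF (conj sFG sFs)).
move=> H [xH [sHG sHs]]; apply: minF.
exact: (conj xH (conj (subforest_trans xG x1 sHG sG1) (conj (subforest_trans xG x2 sHG sG2) sHs))).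
Qed.
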